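(* Let $g\ge 1$ and let $\Gamma_g$ be the chain of $g$ loops with edge lengths $\ell_1,m_1,\dots,\ell_g,m_g$ satisfying the genericity condition. Then there is no divisor $D$ on $\Gamma_g$ of rank $r(D)\ge 1$ such that $K_{\Gamma_g}-2D$ is linearly equivalent to an effective divisor. Equivalently, there is no pair $(D,E)$ of divisors on $\Gamma_g$ with $r(D)\ge 1$, $E$ effective and $2D+E\sim K_{\Gamma_g}$.
   Context: The metric graph $\Gamma_g$: it has vertices $v_0,v_1,\dots,v_g$, and for each $i=1,\dots,g$ two edges joining $v_{i-1}$ and $v_i$, of positive lengths $\ell_i$ and $m_i$. The union of these two edges is the $i$-th loop $\bar\gamma_i$, a circle of circumference $\ell_i+m_i$; consecutive loops $\bar\gamma_i,\bar\gamma_{i+1}$ meet only at $v_i$. Genericity condition: for each $i$, the ratio $\ell_i/m_i$ is not equal to $a/b$ for any positive integers $a,b$ with $a+b\le 2g-2$. A divisor on a metric graph $\Gamma$ is a finite formal $\mathbb Z$-linear combination of points of $\Gamma$; its degree is the sum of coefficients; it is effective if all coefficients are $\ge 0$. A piecewise linear function $\psi$ on $\Gamma$ is a continuous function which is linear with integer slope on each edge of some finite subdivision of $\Gamma$; $\mathrm{ord}_p(\psi)$ is the sum of the incoming slopes of $\psi$ along all edge directions at $p$, and $\mathrm{div}(\psi)=\sum_p \mathrm{ord}_p(\psi)\,p$. Two divisors $D,D'$ are linearly equivalent, $D\sim D'$, if $D-D'=\mathrm{div}(\psi)$ for some such $\psi$. The rank $r(D)$ is the largest integer $r$ such that $D-F$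 is linearly equivalent to an effective divisor for every effective divisor $F$ of degree $r$ ($r(D)=-1$ if $D$ is not equivalent to an effective divisor). The canonical divisor is $K_\Gamma=\sum_{v}(\mathrm{val}(v)-2)\,v$; for $\Gamma_g$ this is $K_{\Gamma_g}=2(v_1+\dots+v_{g-1})$, of degree $2g-2$. *)

(* Defs.v *)
From Stdlib Require Import Reals Lra Lia ZArith Arith List.
Open Scope R_scope.

(* Points of Γ_g, in canonical form:
   - [Vtx j]       : the vertex v_j  (valid when j <= g);
   - [Inn i e t]   : the interior point at distance t from v_{i-1} along the
                     edge of loop i of length ℓ_i (e = true) or m_i (e = false);
                     valid when 1 <= i <= g and 0 < t < length.               *)
Inductive point : Type :=
| Vtx : nat -> point
| Inn : nat -> bool -> R -> point.

Definition point_eq_dec (p q : point) : {p = q} + {p <> q}.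
Proof.
  decide equality; [apply Nat.eq_dec | apply Req_EM_T | apply Bool.bool_dec | apply Nat.eq_dec].
Defined.

Section Graph.
Variables (g : nat) (l m : nat -> R).

Definition len (i : nat) (e : bool) : R := if e then l i else m i.

Definition valid_point (p : point) : Prop :=
  match p with
  | Vtx j => (j <= g)%nat
  | Inn i e t => (1 <= i <= g)%nat /\ 0 < t < len i e
  end.

Definition divisor := list (point * Z).

Definition valid_div (D : divisor) : Prop :=
  forall q z, In (q, z) D -> valid_point q.

Definition coef (D : divisor) (p : point) : Z :=
  fold_right (fun qz acc => if point_eq_dec (fst qz) p then (snd qz + acc)%Z else acc) 0%Z D.

Definition deg (D : divisor) : Z := fold_right (fun qz acc => (snd qz + acc)%Z) 0%Z D.

Definition effective (D : divisor) : Prop := forall p, (0 <= coef D p)%Z.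

Definition div_scale (k : Z) (D : divisor) : divisor :=
  map (fun qz => (fst qz, (k * snd qz)%Z)) D.

Definition div_sub (D F : divisor) : divisor := D ++ div_scale (-1) F.

Definition canonical : divisor := map (fun j => (Vtx j, 2%Z)) (seq 1 (g - 1)).

Definition edge_fun (psi : point -> R) (i : nat) (e : bool) (t : R) : R :=
  if Req_EM_T t 0 then psi (Vtx (i - 1))
  else if Req_EM_T t (len i e) then psi (Vtx i)
  else psi (Inn i e t).

Definition is_PL_on (f : R -> R) (L : R) : Prop :=
  exists (n : nat) (x : nat -> R) (s : nat -> Z),
    x 0%nat = 0 /\ x n = L /\
    (forall k, (k < n)%nat -> x k < x (S k)) /\
    (forall k, (k < n)%nat -> forall t, x k <= t <= x (S k) ->
        f t = f (x k) + IZR (s k) * (t - x k)).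

(* piecewise linear function on Γ_g (continuity is built in: the edge
   restrictions are continuous and take the vertex values at the endpoints) *)
Definition is_PL (psi : point -> R) : Prop :=
  forall i e, (1 <= i <= g)%nat -> is_PL_on (edge_fun psi i e) (len i e).

(* outgoing slope s of f at t in the direction of increasing / decreasing t *)
Definition slope_right (f : R -> R) (t : R) (s : Z) : Prop :=
  exists eps, 0 < eps /\ forall h, 0 <= h <= eps -> f (t + h) = f t + IZR s * h.
Definition slope_left (f : R -> R) (t : R) (s : Z) : Prop :=
  exists eps, 0 < eps /\ forall h, 0 <= h <= eps -> f (t - h) = f t + IZR s * h.

(* ord_p(psi) = n : sum over all edge directions at p of the incoming slope
   (incoming slope = - outgoing slope). *)
Definition ord_is (psi : point -> R) (p : point) (n : Z) : Prop :=
  match p with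
  | Inn i e t =>
      exists s1 s2, slope_right (edge_fun psi i e) t s1 /\
                    slope_left (edge_fun psi i e) t s2 /\ n = (- (s1 + s2))%Z
  | Vtx j =>
      exists a1 a2 b1 b2 : Z,
        (if Nat.leb 1 j
         then slope_left (edge_fun psi j true) (len j true) a1 /\
              slope_left (edge_fun psi j false) (len j false) a2
         else a1 = 0%Z /\ a2 = 0%Z) /\
        (if Nat.ltb j g
         then slope_right (edge_fun psi (S j) true) 0 b1 /\
              slope_right (edge_fun psi (S j) false) 0 b2
         else b1 = 0%Z /\ b2 = 0%Z) /\
        n = (- (a1 + a2 + b1 + b2))%Z
  end.

Definition lin_equiv (D D' : divisor) : Prop :=
  exists psi, is_PL psi /\
    forall p, valid_point p -> ord_is psi p (coef D p - coef D' p)%Z.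

Definition rank_prop (D : divisor) (r : nat) : Prop :=
  forall F, valid_div F -> effective F -> deg F = Z.of_nat r ->
    exists E, valid_div E /\ effective E /\ lin_equiv (div_sub D F) E.

Definition rank_ge (D : divisor) (k : nat) : Prop :=
  exists r : nat, (k <= r)%nat /\ rank_prop D r.

End Graph.

Definition generic (g : nat) (l m : nat -> R) : Prop :=
  forall i, (1 <= i <= g)%nat ->
    forall a b : nat, (1 <= a)%nat -> (1 <= b)%nat -> (a + b <= 2 * g - 2)%nat ->
      l i / m i <> INR a / INR b.

(* Main.v *)
Require Import Defs.
From Stdlib Require Import Reals ZArith Arith List Lra Lia.
From Stdlib Require Import ClassicalEpsilon Classical.
Open Scope R_scope.

Definition PhiR (h : point -> R) (D : divisor) : R :=
  fold_right (fun qz acc => IZR (snd qz) * h (fst qz) + acc) 0 D.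
Definition PhiZ (h : point -> Z) (D : divisor) : Z :=
  fold_right (fun qz acc => (snd qz * h (fst qz) + acc)%Z) 0%Z D.

Lemma PhiR_app h A B : PhiR h (A ++ B) = PhiR h A + PhiR h B.
Proof. induction A as [|[q z] A IH]; simpl; [ring| rewrite IH; ring]. Qed.
Lemma PhiZ_app h A B : PhiZ h (A ++ B) = (PhiZ h A + PhiZ h B)%Z.
Proof. induction A as [|[q z] A IH]; simpl; [ring| rewrite IH; ring]. Qed.
Lemma PhiR_scale h k A : PhiR h (div_scale k A) = IZR k * PhiR h A.
Proof. induction A as [|[q z] A IH]; simpl; [ring| rewrite IH, mult_IZR; ring]. Qed.
Lemma PhiZ_scale h k A : PhiZ h (div_scale k A) = (k * PhiZ h A)%Z.
Proof. induction A as [|[q z] A IH]; simpl; [ring| rewrite IH; ring]. Qed.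
Lemma PhiR_sub h A B : PhiR h (div_sub A B) = PhiR h A - PhiR h B.
Proof. unfold div_sub. rewrite PhiR_app, PhiR_scale. simpl. ring. Qed.
Lemma PhiZ_sub h A B : PhiZ h (div_sub A B) = (PhiZ h A - PhiZ h B)%Z.
Proof. unfold div_sub. rewrite PhiZ_app, PhiZ_scale. ring. Qed.
Lemma PhiR_ext h1 h2 A : (forall p, h1 p = h2 p) -> PhiR h1 A = PhiR h2 A.
Proof. intro H. induction A as [|[q z] A IH]; simpl; [ring| rewrite IH, H; ring]. Qed.
Lemma PhiZ_ext h1 h2 A : (forall p, h1 p = h2 p) -> PhiZ h1 A = PhiZ h2 A.
Proof. intro H. induction A as [|[q z] A IH]; simpl; [ring| rewrite IH, H; ring]. Qed.
Lemma PhiR_plus h1 h2 A : PhiR (fun p => h1 p + h2 p) A = PhiR h1 A + PhiR h2 A.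
Proof. induction A as [|[q z] A IH]; simpl; [ring| rewrite IH; ring]. Qed.
Lemma PhiR_mulc c h A : PhiR (fun p => c * h p) A = c * PhiR h A.
Proof. induction A as [|[q z] A IH]; simpl; [ring| rewrite IH; ring]. Qed.
Lemma PhiZ_plus h1 h2 A : PhiZ (fun p => h1 p + h2 p)%Z A = (PhiZ h1 A + PhiZ h2 A)%Z.
Proof. induction A as [|[q z] A IH]; simpl; [ring| rewrite IH; ring]. Qed.
Lemma PhiZ_minus h1 h2 A : PhiZ (fun p => h1 p - h2 p)%Z A = (PhiZ h1 A - PhiZ h2 A)%Z.
Proof. induction A as [|[q z] A IH]; simpl; [ring| rewrite IH; ring]. Qed.
Lemma PhiR_IZR h A : PhiR (fun p => IZR (h p)) A = IZR (PhiZ h A).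
Proof. induction A as [|[q z] A IH]; simpl; [ring| rewrite IH, plus_IZR, mult_IZR; ring]. Qed.
Lemma deg_PhiZ A : deg A = PhiZ (fun _ => 1%Z) A.
Proof. induction A as [|[q z] A IH]; simpl; [ring| rewrite IH; ring]. Qed.

Lemma coef_app A B p : coef (A ++ B) p = (coef A p + coef B p)%Z.
Proof. induction A as [|[q z] A IH]; simpl; [ring|]. destruct point_eq_dec; simpl; rewrite IH; ring. Qed.
Lemma coef_scale k A p : coef (div_scale k A) p = (k * coef A p)%Z.
Proof. induction A as [|[q z] A IH]; simpl; [ring|]. destruct point_eq_dec; simpl; rewrite IH; ring. Qed.
Lemma coef_sub A B p : coef (div_sub A B) p = (coef A p - coef B p)%Z.
Proof. unfold div_sub. rewrite coef_app, coef_scale. ring. Qed.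
Lemma coef_notin A p : (forall q z, In (q,z) A -> q <> p) -> coef A p = 0%Z.
Proof.
  induction A as [|[q z] A IH]; simpl; intros H; [reflexivity|].
  destruct point_eq_dec as [e|e]; simpl in e. - exfalso; eapply H; eauto.
  - apply IH. intros; eapply H; eauto.
Qed.

Definition filt (q : point) (D : divisor) : divisor :=
  filter (fun qz => if point_eq_dec (fst qz) q then false else true) D.

Lemma PhiR_decomp h q D : PhiR h D = IZR (coef D q) * h q + PhiR h (filt q D).
Proof.
  induction D as [|[p z] D IH]; simpl; [ring|].
  destruct (point_eq_dec p q) as [e|e]; simpl.
  - subst. rewrite IH, plus_IZR. ring.
  - rewrite IH. ring.
Qed.
Lemma PhiZ_decomp h q D : PhiZ h D = (coef D q * h q + PhiZ h (filt q D))%Z.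
Proof.
  induction D as [|[p z] D IH]; simpl; [ring|].
  destruct (point_eq_dec p q) as [e|e]; simpl.
  - subst. rewrite IH. ring.
  - rewrite IH. ring.
Qed.
Lemma coef_filt q D p : coef (filt q D) p = if point_eq_dec p q then 0%Z else coef D p.
Proof.
  induction D as [|[r z] D IH]; simpl.
  - destruct point_eq_dec; reflexivity.
  - destruct (point_eq_dec r q) as [e|e]; simpl.
    + subst. rewrite IH. destruct (point_eq_dec p q), (point_eq_dec q p); subst; try ring; congruence.
    + destruct (point_eq_dec r p) as [e'|e']; simpl; rewrite IH;
      destruct (point_eq_dec p q); subst; try ring; congruence.
Qed.
Lemma filt_len q z D : (length (filt q ((q,z)::D)) <= length D)%nat.
Proof.
  unfold filt. simpl. destruct point_eq_dec; [|congruence].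
  apply filter_length_le.
Qed.

Lemma strong_list (P : divisor -> Prop) :
  P nil -> (forall q z D, (forall D', (length D' <= length D)%nat -> P D') -> P ((q,z)::D)) ->
  forall D, P D.
Proof.
  intros H0 HS. assert (forall n D, (length D <= n)%nat -> P D).
  { induction n; intros D HD.
    - destruct D; [exact H0| simpl in HD; lia].
    - destruct D as [|[q z] D]; [exact H0|]. apply HS. intros D' HD'. apply IHn. simpl in HD. lia. }
  intros D; eapply H; eauto.
Qed.

Lemma PhiR_zero h D : (forall p, coef D p = 0%Z) -> PhiR h D = 0.
Proof.
  induction D as [|q z D IH] using strong_list; intros Hc; [reflexivity|]. rewrite (PhiR_decomp h q). rewrite Hc.
  rewrite IH. ring. apply filt_len. intros p. rewrite coef_filt. destruct point_eq_dec; auto.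
Qed.

Lemma PhiZ_pos h D : (forall p, 0 <= coef D p)%Z -> (forall p, 0 <= h p)%Z -> (0 <= PhiZ h D)%Z.
Proof.
  intros Hc Hh. induction D as [|q z D IH] using strong_list; [simpl; lia|]. rewrite (PhiZ_decomp h q).
  assert (0 <= PhiZ h (filt q ((q, z) :: D)))%Z.
  { apply IH. apply filt_len. intros p. rewrite coef_filt. destruct point_eq_dec; [lia|auto]. }
  specialize (Hc q). specialize (Hh q). nia.
Qed.

Lemma PhiZ_supp A f D : (forall p, 0 <= coef D p)%Z -> (forall p, 0 <= A p)%Z ->
  PhiZ A D = 0%Z -> (forall p, A p = 0%Z -> f p = 0) -> PhiR f D = 0.
Proof.
  intros Hc HA. induction D as [|q z D IH] using strong_list; intros H0 Hf; [reflexivity|]. rewrite (PhiR_decomp f q). rewrite (PhiZ_decomp A q) in H0.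
  set (D1 := filt q ((q, z) :: D)) in *.
  assert (Hc1 : forall p, (0 <= coef D1 p)%Z).
  { intros p. unfold D1. rewrite coef_filt. destruct point_eq_dec; [lia|auto]. }
  assert (0 <= PhiZ A D1)%Z by (apply PhiZ_pos; auto).
  assert (Hq := Hc q). assert (Ha := HA q).
  assert (coef ((q,z)::D) q * A q = 0)%Z by nia.
  rewrite IH; [| apply filt_len | auto | lia | auto].
  apply Z.mul_eq_0 in H1. destruct H1 as [H1|H1].
  - rewrite H1. ring.
  - rewrite (Hf q H1). ring.
Qed.

Definition PLd (f : R -> R) (L : R) (n : nat) (x : nat -> R) (s : nat -> Z) : Prop :=
  x 0%nat = 0 /\ x n = L /\ (forall k, (k < n)%nat -> x k < x (S k)) /\
  (forall k, (k < n)%nat -> forall t, x k <= t <= x (S k) -> f t = f (x k) + IZR (s k) * (t - x k)).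

Lemma PLd_mono f L n x s : PLd f L n x s -> forall i j, (i < j <= n)%nat -> x i < x j.
Proof.
  intros (H0&HL&Hm&Hf) i j. induction j; intros Hij; [lia|].
  destruct (Nat.eq_dec i j). subst. apply Hm; lia.
  apply Rlt_trans with (x j). apply IHj; lia. apply Hm; lia.
Qed.
Lemma PLd_range f L n x s : PLd f L n x s -> forall k, (1 <= k < n)%nat -> 0 < x k < L.
Proof.
  intros H k Hk. pose proof (PLd_mono _ _ _ _ _ H) as M. destruct H as (H0&HL&_).
  split. rewrite <- H0. apply M; lia. rewrite <- HL. apply M; lia.
Qed.
Lemma PLd_n f L n x s : 0 < L -> PLd f L n x s -> (1 <= n)%nat.
Proof. intros HL (H0&H1&_). destruct n; [|lia]. rewrite H0 in H1. lra. Qed.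

Lemma PLd_right f L n x s : PLd f L n x s -> forall k, (k < n)%nat -> slope_right f (x k) (s k).
Proof.
  intros H k Hk. pose proof H as H'. destruct H as (H0&HL&Hm&Hf).
  exists (x (S k) - x k). split. specialize (Hm k Hk). lra.
  intros h Hh. rewrite (Hf k Hk (x k + h)) by lra. ring.
Qed.
Lemma PLd_left f L n x s : PLd f L n x s -> forall k, (1 <= k <= n)%nat -> slope_left f (x k) (- s (k-1)%nat).
Proof.
  intros H k Hk. destruct H as (H0&HL&Hm&Hf).
  assert (Hk' : (k - 1 < n)%nat) by lia.
  assert (E : S (k-1) = k) by lia.
  exists (x k - x (k-1)%nat). split. specialize (Hm _ Hk'). rewrite E in Hm. lra.
  intros h Hh. rewrite (Hf _ Hk' (x k - h)) by (rewrite E; lra).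
  rewrite (Hf _ Hk' (x k)) by (rewrite E; specialize (Hm _ Hk'); rewrite E in Hm; lra).
  rewrite opp_IZR. ring.
Qed.
Lemma PLd_gen f L n x s : PLd f L n x s -> forall k, (k < n)%nat -> forall t, x k < t < x (S k) ->
  slope_right f t (s k) /\ slope_left f t (- s k).
Proof.
  intros H k Hk t Ht. destruct H as (H0&HL&Hm&Hf). split.
  - exists (x (S k) - t). split; [lra|]. intros h Hh.
    rewrite (Hf k Hk (t+h)) by lra. rewrite (Hf k Hk t) by lra. ring.
  - exists (t - x k). split; [lra|]. intros h Hh.
    rewrite (Hf k Hk (t-h)) by lra. rewrite (Hf k Hk t) by lra. rewrite opp_IZR. ring.
Qed.
Lemma PLd_find f L n x s : PLd f L n x s -> forall t, 0 <= t < L -> exists k, (k < n)%nat /\ x k <= t < x (S k).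
Proof.
  intros (H0&HL&Hm&Hf) t Ht. rewrite <- HL in Ht. rewrite <- H0 in Ht.
  clear HL Hf. induction n. lra.
  destruct (Rlt_le_dec t (x n)).
  - destruct IHn as [k Hk]. intros; apply Hm; lia. lra. exists k; split; [lia|tauto].
  - exists n. split; [lia|lra].
Qed.

Lemma slope_right_uniq f t a b : slope_right f t a -> slope_right f t b -> a = b.
Proof.
  intros [e1 [He1 H1]] [e2 [He2 H2]]. set (h := Rmin e1 e2).
  assert (0 < h) by (unfold h; apply Rmin_glb_lt; lra).
  assert (h <= e1) by apply Rmin_l. assert (h <= e2) by apply Rmin_r.
  specialize (H1 h ltac:(lra)). specialize (H2 h ltac:(lra)).
  apply eq_IZR. apply Rmult_eq_reg_r with h; lra.
Qed.
Lemma slope_left_uniq f t a b : slope_left f t a -> slope_left f t b -> a = b.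
Proof.
  intros [e1 [He1 H1]] [e2 [He2 H2]]. set (h := Rmin e1 e2).
  assert (0 < h) by (unfold h; apply Rmin_glb_lt; lra).
  assert (h <= e1) by apply Rmin_l. assert (h <= e2) by apply Rmin_r.
  specialize (H1 h ltac:(lra)). specialize (H2 h ltac:(lra)).
  apply eq_IZR. apply Rmult_eq_reg_r with h; lra.
Qed.

Definition sumR (f : nat -> R) (a n : nat) : R := fold_right (fun k acc => f k + acc) 0 (seq a n).
Lemma sumR_S f a n : sumR f a (S n) = sumR f a n + f (a + n)%nat.
Proof. unfold sumR. rewrite seq_S, fold_right_app. simpl.
  generalize (seq a n). induction l; simpl; [ring|rewrite IHl; ring]. Qed.
Lemma sumR_ext f1 f2 a n : (forall k, (a <= k < a + n)%nat -> f1 k = f2 k) -> sumR f1 a n = sumR f2 a n.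
Proof. intros H. induction n. reflexivity. rewrite !sumR_S, IHn, H; [reflexivity|lia|intros; apply H; lia]. Qed.
Lemma sumR_shift f n : sumR f 1 n = sumR (fun j => f (S j)) 0 n.
Proof. induction n. reflexivity. rewrite !sumR_S, IHn. reflexivity. Qed.
Lemma PhiR_map h (P : nat -> point) (c : nat -> Z) a n :
  PhiR h (map (fun k => (P k, c k)) (seq a n)) = sumR (fun k => IZR (c k) * h (P k)) a n.
Proof. unfold sumR. generalize (seq a n). induction l; simpl; [reflexivity|rewrite IHl; reflexivity]. Qed.

Lemma tele1 (s : nat -> Z) n : sumR (fun k => IZR (s (k-1)%nat - s k)) 1 n = IZR (s 0%nat - s n).
Proof.
  induction n. simpl. unfold sumR; simpl. rewrite Z.sub_diag. reflexivity.
  rewrite sumR_S, IHn. replace (1 + n - 1)%nat with n by lia. replace (1+n)%nat with (S n) by lia.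
  rewrite !minus_IZR. ring.
Qed.
Lemma tele2 f L n x s : PLd f L n x s -> forall n', (n' < n)%nat ->
  sumR (fun k => IZR (s (k-1)%nat - s k) * x k) 1 n' =
  f (x (S n')) - f (x 0%nat) - IZR (s n') * x (S n') + IZR (s 0%nat) * x 0%nat.
Proof.
  intros H. pose proof H as H'. destruct H' as (H0&HL&Hm&Hf). induction n'; intros Hn.
  - unfold sumR; simpl. rewrite (Hf 0%nat Hn (x 1%nat)). ring. specialize (Hm 0%nat Hn). lra.
  - rewrite sumR_S, IHn' by lia. replace (1 + n' - 1)%nat with n' by lia. replace (1+n')%nat with (S n') by lia.
    rewrite (Hf (S n') Hn (x (S (S n')))). rewrite minus_IZR. ring. specialize (Hm _ Hn). lra.
Qed.

Definition ovf (g : nat) (nn : nat -> bool -> nat) (ss : nat -> bool -> nat -> Z) (j : nat) : Z :=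
  ((if (1 <=? j)%nat then ss j true (nn j true - 1)%nat + ss j false (nn j false - 1)%nat else 0)
   - (if (j <? g)%nat then ss (S j) true 0%nat + ss (S j) false 0%nat else 0))%Z.
Definition VPf g nn ss : divisor := map (fun j => (Vtx j, ovf g nn ss j)) (seq 0 (S g)).
Definition edgeL (nn : nat -> bool -> nat) (xx : nat -> bool -> nat -> R) (ss : nat -> bool -> nat -> Z) i e : divisor :=
  map (fun k => (Inn i e (xx i e k), (ss i e (k-1)%nat - ss i e k)%Z)) (seq 1 (nn i e - 1)).
Definition IPf g nn xx ss : divisor := flat_map (fun i => edgeL nn xx ss i true ++ edgeL nn xx ss i false) (seq 1 g).

Lemma coef_map_one (P : nat -> point) (c : nat -> Z) L k0 p :
  NoDup L -> In k0 L -> P k0 = p -> (forall k, In k L -> k <> k0 -> P k <> p) ->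
  coef (map (fun k => (P k, c k)) L) p = c k0.
Proof.
  induction L as [|k L IH]; intros ND Hin HP Hne; [destruct Hin|].
  inversion ND; subst. simpl. destruct Hin as [->|Hin].
  - destruct point_eq_dec; [|congruence]. simpl.
    rewrite coef_notin. ring. intros q z Hq. apply in_map_iff in Hq. destruct Hq as [k' [E Hk']].
    inversion E; subst. apply Hne. right; auto. intros ->. contradiction.
  - destruct point_eq_dec as [e|e]; simpl in e.
    + exfalso. eapply Hne. left; reflexivity. intros ->. contradiction. auto.
    + apply IH; auto. intros; apply Hne; auto. right; auto.
Qed.

Lemma PhiR_flat_map h (F : nat -> divisor) a n :
  PhiR h (flat_map F (seq a n)) = sumR (fun i => PhiR h (F i)) a n.
Proof. unfold sumR. generalize (seq a n). induction l; simpl; [reflexivity|rewrite PhiR_app, IHl; reflexivity]. Qed.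

Lemma sumR_mulc c f a n : sumR (fun k => f k * c) a n = c * sumR f a n.
Proof. induction n. unfold sumR; simpl; ring. rewrite !sumR_S, IHn. ring. Qed.

Lemma ord_uniq g l m psi p a b : ord_is g l m psi p a -> ord_is g l m psi p b -> a = b.
Proof.
  destruct p as [j|i e t]; unfold ord_is.
  - intros (a1&a2&b1&b2&H1&H2&->) (a1'&a2'&b1'&b2'&H1'&H2'&->).
    assert (a1 = a1' /\ a2 = a2') as [-> ->].
    { destruct (1 <=? j)%nat. destruct H1, H1'. split; eapply slope_left_uniq; eauto. lia. }
    assert (b1 = b1' /\ b2 = b2') as [-> ->].
    { destruct (j <? g)%nat. destruct H2, H2'. split; eapply slope_right_uniq; eauto. lia. }
    reflexivity.
  - intros (s1&s2&H1&H2&->) (s1'&s2'&H1'&H2'&->).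
    rewrite (slope_right_uniq _ _ _ _ H1 H1'), (slope_left_uniq _ _ _ _ H2 H2'). reflexivity.
Qed.

Lemma PL_choice g l m psi : is_PL g l m psi ->
  exists (nn : nat -> bool -> nat) (xx : nat -> bool -> nat -> R) (ss : nat -> bool -> nat -> Z),
    forall i e, (1 <= i <= g)%nat -> PLd (edge_fun l m psi i e) (len l m i e) (nn i e) (xx i e) (ss i e).
Proof.
  intros HPL.
  destruct (choice (fun (ie : nat * bool) (y : nat * (nat -> R) * (nat -> Z)) =>
     (1 <= fst ie <= g)%nat -> PLd (edge_fun l m psi (fst ie) (snd ie)) (len l m (fst ie) (snd ie))
        (fst (fst y)) (snd (fst y)) (snd y))) as [F HF].
  { intros [i e]. destruct (le_lt_dec 1 i); [destruct (le_lt_dec i g)|].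
    - destruct (HPL i e ltac:(lia)) as (n&x&s&H). exists (n,x,s). intros _. exact H.
    - exists (0%nat, fun _ => 0, fun _ => 0%Z). simpl. lia.
    - exists (0%nat, fun _ => 0, fun _ => 0%Z). simpl. lia. }
  exists (fun i e => fst (fst (F (i,e)))), (fun i e => snd (fst (F (i,e)))), (fun i e => snd (F (i,e))).
  intros i e Hi. apply (HF (i,e)). exact Hi.
Qed.

Lemma coef_flat (F : nat -> divisor) L i p :
  (forall i', In i' L -> i' <> i -> forall q z, In (q,z) (F i') -> q <> p) -> NoDup L -> In i L ->
  coef (flat_map F L) p = coef (F i) p.
Proof.
  induction L as [|i' L IH]; intros H ND Hin; [destruct Hin|]. inversion ND; subst.
  simpl. rewrite coef_app. destruct Hin as [->|Hin].
  - rewrite (coef_notin (flat_map F L)). ring. intros q z Hq. apply in_flat_map in Hq.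
    destruct Hq as [i'' [Hi'' Hq]]. refine (H i'' (or_intror Hi'') _ q z Hq). intros ->. contradiction.
  - rewrite (coef_notin (F i')). rewrite IH; auto. intros i'' Hi'' Hne q z Hq. exact (H i'' (or_intror Hi'') Hne q z Hq).
    intros q z Hq. refine (H i' (or_introl eq_refl) _ q z Hq). intros ->. contradiction.
Qed.

Lemma in_edgeL nn xx ss i e q z : In (q,z) (edgeL nn xx ss i e) ->
  exists k, (1 <= k < nn i e)%nat /\ q = Inn i e (xx i e k).
Proof.
  unfold edgeL. intros H. apply in_map_iff in H. destruct H as [k [E Hk]]. inversion E; subst.
  apply in_seq in Hk. exists k. split; [lia|reflexivity].
Qed.

Lemma len_pos g l m i e : (forall i, (1 <= i <= g)%nat -> 0 < l i /\ 0 < m i) -> (1 <= i <= g)%nat -> 0 < len l m i e.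
Proof. intros H Hi. unfold len. destruct e; apply H; auto. Qed.

Lemma coef_VP_vtx g nn ss j : (j <= g)%nat -> coef (VPf g nn ss) (Vtx j) = ovf g nn ss j.
Proof.
  intros Hj. unfold VPf. apply (coef_map_one Vtx (ovf g nn ss)). apply seq_NoDup.
  apply in_seq; lia. reflexivity. intros k _ Hk E. inversion E; auto.
Qed.
Lemma coef_VP_inn g nn ss i e t : coef (VPf g nn ss) (Inn i e t) = 0%Z.
Proof. apply coef_notin. intros q z H. unfold VPf in H. apply in_map_iff in H.
  destruct H as [k [E _]]. inversion E; subst. discriminate. Qed.
Lemma coef_IP_vtx g nn xx ss j : coef (IPf g nn xx ss) (Vtx j) = 0%Z.
Proof. apply coef_notin. intros q z H. unfold IPf in H. apply in_flat_map in H.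
  destruct H as [i [_ H]]. apply in_app_iff in H. destruct H as [H|H]; apply in_edgeL in H;
  destruct H as [k [_ ->]]; discriminate. Qed.
Lemma coef_IP_inn g nn xx ss i e t : (1 <= i <= g)%nat ->
  coef (IPf g nn xx ss) (Inn i e t) = coef (edgeL nn xx ss i e) (Inn i e t).
Proof.
  intros Hi. unfold IPf. rewrite (coef_flat _ _ i). rewrite coef_app.
  destruct e.
  - rewrite (coef_notin (edgeL nn xx ss i false)). ring. intros q z H. apply in_edgeL in H.
    destruct H as [k [_ ->]]. congruence.
  - rewrite (coef_notin (edgeL nn xx ss i true)). ring. intros q z H. apply in_edgeL in H.
    destruct H as [k [_ ->]]. congruence.
  - intros i' _ Hne q z H. apply in_app_iff in H. destruct H as [H|H]; apply in_edgeL in H;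
    destruct H as [k [_ ->]]; congruence.
  - apply seq_NoDup.
  - apply in_seq; lia.
Qed.

Lemma Gpsi_ord g l m psi nn xx ss :
  (forall i, (1 <= i <= g)%nat -> 0 < l i /\ 0 < m i) ->
  (forall i e, (1 <= i <= g)%nat -> PLd (edge_fun l m psi i e) (len l m i e) (nn i e) (xx i e) (ss i e)) ->
  forall p, valid_point g l m p -> ord_is g l m psi p (coef (VPf g nn ss ++ IPf g nn xx ss) p).
Proof.
  intros Hlm HP p Hp. rewrite coef_app. destruct p as [j|i e t]; simpl in Hp.
  - rewrite coef_VP_vtx, coef_IP_vtx by lia. unfold ord_is.
    destruct (1 <=? j)%nat eqn:E1; destruct (j <? g)%nat eqn:E2;
      apply Nat.leb_le in E1 || apply Nat.leb_gt in E1; apply Nat.ltb_lt in E2 || apply Nat.ltb_ge in E2.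
    + exists (- ss j true (nn j true - 1)%nat)%Z, (- ss j false (nn j false - 1)%nat)%Z,
             (ss (S j) true 0%nat), (ss (S j) false 0%nat).
      split; [split|split; [split|]].
      * assert (H := HP j true ltac:(lia)). pose proof (PLd_n _ _ _ _ _ (len_pos g l m j true Hlm ltac:(lia)) H).
        pose proof (PLd_left _ _ _ _ _ H (nn j true) ltac:(lia)). destruct H as (_&XL&_). rewrite XL in H1. exact H1.
      * assert (H := HP j false ltac:(lia)). pose proof (PLd_n _ _ _ _ _ (len_pos g l m j false Hlm ltac:(lia)) H).
        pose proof (PLd_left _ _ _ _ _ H (nn j false) ltac:(lia)). destruct H as (_&XL&_). rewrite XL in H1. exact H1.
      * assert (H := HP (S j) true ltac:(lia)). pose proof (PLd_n _ _ _ _ _ (len_pos g l m (S j) true Hlm ltac:(lia)) H).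
        pose proof (PLd_right _ _ _ _ _ H 0%nat ltac:(lia)). destruct H as (X0&_). rewrite X0 in H1. exact H1.
      * assert (H := HP (S j) false ltac:(lia)). pose proof (PLd_n _ _ _ _ _ (len_pos g l m (S j) false Hlm ltac:(lia)) H).
        pose proof (PLd_right _ _ _ _ _ H 0%nat ltac:(lia)). destruct H as (X0&_). rewrite X0 in H1. exact H1.
      * unfold ovf. replace (1 <=? j)%nat with true by (symmetry; apply Nat.leb_le; lia).
        replace (j <? g)%nat with true by (symmetry; apply Nat.ltb_lt; lia). ring.
    + exists (- ss j true (nn j true - 1)%nat)%Z, (- ss j false (nn j false - 1)%nat)%Z, 0%Z, 0%Z.
      split; [split|split; [split|]].
      * assert (H := HP j true ltac:(lia)). pose proof (PLd_n _ _ _ _ _ (len_pos g l m j true Hlm ltac:(lia)) H).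
        pose proof (PLd_left _ _ _ _ _ H (nn j true) ltac:(lia)). destruct H as (_&XL&_). rewrite XL in H1. exact H1.
      * assert (H := HP j false ltac:(lia)). pose proof (PLd_n _ _ _ _ _ (len_pos g l m j false Hlm ltac:(lia)) H).
        pose proof (PLd_left _ _ _ _ _ H (nn j false) ltac:(lia)). destruct H as (_&XL&_). rewrite XL in H1. exact H1.
      * reflexivity.
      * reflexivity.
      * unfold ovf. replace (1 <=? j)%nat with true by (symmetry; apply Nat.leb_le; lia).
        replace (j <? g)%nat with false by (symmetry; apply Nat.ltb_ge; lia). ring.
    + exists 0%Z, 0%Z, (ss (S j) true 0%nat), (ss (S j) false 0%nat).
      split; [split|split; [split|]].
      * reflexivity.
      * reflexivity.
      * assert (H := HP (S j) true ltac:(lia)). pose proof (PLd_n _ _ _ _ _ (len_pos g l m (S j) true Hlm ltac:(lia)) H).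
        pose proof (PLd_right _ _ _ _ _ H 0%nat ltac:(lia)). destruct H as (X0&_). rewrite X0 in H1. exact H1.
      * assert (H := HP (S j) false ltac:(lia)). pose proof (PLd_n _ _ _ _ _ (len_pos g l m (S j) false Hlm ltac:(lia)) H).
        pose proof (PLd_right _ _ _ _ _ H 0%nat ltac:(lia)). destruct H as (X0&_). rewrite X0 in H1. exact H1.
      * unfold ovf. replace (1 <=? j)%nat with false by (symmetry; apply Nat.leb_gt; lia).
        replace (j <? g)%nat with true by (symmetry; apply Nat.ltb_lt; lia). ring.
    + exists 0%Z, 0%Z, 0%Z, 0%Z. split; [split|split; [split|]]; try reflexivity.
      unfold ovf. replace (1 <=? j)%nat with false by (symmetry; apply Nat.leb_gt; lia).
        replace (j <? g)%nat with false by (symmetry; apply Nat.ltb_ge; lia). ring.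
  - destruct Hp as [Hi Ht]. rewrite coef_VP_inn, coef_IP_inn by lia. simpl.
    assert (H := HP i e Hi). set (f := edge_fun l m psi i e) in *.
    pose proof (PLd_mono _ _ _ _ _ H) as Mono.
    destruct (classic (exists k, (1 <= k < nn i e)%nat /\ xx i e k = t)) as [[k [Hk Ek]]|Hno].
    + unfold edgeL. rewrite (coef_map_one (fun k => Inn i e (xx i e k)) (fun k => (ss i e (k-1)%nat - ss i e k)%Z) _ k).
      * exists (ss i e k), (- ss i e (k-1)%nat)%Z. split; [|split].
        -- rewrite <- Ek. apply (PLd_right _ _ _ _ _ H). lia.
        -- rewrite <- Ek. apply (PLd_left _ _ _ _ _ H). lia.
        -- ring.
      * apply seq_NoDup.
      * apply in_seq; lia.
      * rewrite Ek; reflexivity.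
      * intros k' Hk' Hne E. inversion E. apply in_seq in Hk'.
        destruct (Nat.lt_total k k') as [Hl|[Hl|Hl]]; [|lia|].
        -- pose proof (Mono k k' ltac:(lia)). lra.
        -- pose proof (Mono k' k ltac:(lia)). lra.
    + rewrite coef_notin.
      * destruct (PLd_find _ _ _ _ _ H t ltac:(lra)) as [k [Hk Hx]].
        assert (xx i e k <> t).
        { intros E. destruct k. destruct H as (H0&_). rewrite H0 in E. lra.
          apply Hno. exists (S k). split; [lia|auto]. }
        destruct (PLd_gen _ _ _ _ _ H k Hk t ltac:(lra)) as [R L].
        exists (ss i e k), (- ss i e k)%Z. split; [exact R|split; [exact L|ring]].
      * intros q z Hq. apply in_edgeL in Hq. destruct Hq as [k [Hk ->]]. intros E. inversion E.
        apply Hno. exists k. auto.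
Qed.

Lemma Gpsi_valid g l m psi nn xx ss :
  (forall i e, (1 <= i <= g)%nat -> PLd (edge_fun l m psi i e) (len l m i e) (nn i e) (xx i e) (ss i e)) ->
  forall q z, In (q,z) (VPf g nn ss ++ IPf g nn xx ss) -> valid_point g l m q.
Proof.
  intros HP q z H. apply in_app_iff in H. destruct H as [H|H].
  - unfold VPf in H. apply in_map_iff in H. destruct H as [j [E Hj]]. inversion E; subst.
    apply in_seq in Hj. simpl. lia.
  - unfold IPf in H. apply in_flat_map in H. destruct H as [i [Hi H]]. apply in_seq in Hi.
    assert (forall e, In (q,z) (edgeL nn xx ss i e) -> valid_point g l m q).
    { intros e He. apply in_edgeL in He. destruct He as [k [Hk ->]]. simpl. split. lia.
      eapply PLd_range. apply HP. lia. lia. }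
    apply in_app_iff in H. destruct H; eauto.
Qed.

Lemma edge_Phi_const h c nn xx ss i e f L : PLd f L (nn i e) (xx i e) (ss i e) -> 0 < L ->
  (forall t, h (Inn i e t) = c) -> PhiR h (edgeL nn xx ss i e) = c * IZR (ss i e 0%nat - ss i e (nn i e - 1)%nat).
Proof.
  intros H HL Hh. unfold edgeL. rewrite PhiR_map.
  rewrite (sumR_ext _ (fun k => IZR (ss i e (k - 1)%nat - ss i e k) * c)) by (intros; rewrite Hh; reflexivity).
  rewrite sumR_mulc, tele1. reflexivity.
Qed.
Lemma edge_Phi_lin h sg nn xx ss i e f L : PLd f L (nn i e) (xx i e) (ss i e) -> 0 < L ->
  (forall t, h (Inn i e t) = sg * t) ->
  PhiR h (edgeL nn xx ss i e) = sg * (f L - f 0 - IZR (ss i e (nn i e - 1)%nat) * L).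
Proof.
  intros H HL Hh. pose proof (PLd_n _ _ _ _ _ HL H). unfold edgeL. rewrite PhiR_map.
  rewrite (sumR_ext _ (fun k => IZR (ss i e (k - 1)%nat - ss i e k) * xx i e k * sg))
    by (intros; rewrite Hh; ring).
  rewrite sumR_mulc. rewrite (tele2 _ _ _ _ _ H) by lia.
  replace (S (nn i e - 1)) with (nn i e) by lia. destruct H as (X0&X1&_). rewrite X0, X1. ring.
Qed.

Lemma sumR_plus f1 f2 a n : sumR (fun k => f1 k + f2 k) a n = sumR f1 a n + sumR f2 a n.
Proof. induction n. unfold sumR; simpl; ring. rewrite !sumR_S, IHn. ring. Qed.

Lemma tele0 (T : nat -> Z) n : sumR (fun j => IZR (T j - T (S j))) 0 n = IZR (T 0%nat - T n).
Proof. induction n. unfold sumR; simpl. rewrite Z.sub_diag. reflexivity.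
  rewrite sumR_S, IHn. simpl. rewrite !minus_IZR. ring. Qed.

Definition wk (l : nat -> R) (k : nat) (p : point) : R :=
  match p with
  | Vtx j => if (k <=? j)%nat then l k else 0
  | Inn i e t => if (i <? k)%nat then 0 else if (k <? i)%nat then l k else (if e then t else - t)
  end.
Definition cong (x c : R) := exists q : Z, x = IZR q * c.

Lemma sum_rearr (V E : nat -> R) g : sumR V 0 (S g) + sumR E 1 g = sumR (fun j => V j + E (S j)) 0 g + V g.
Proof. rewrite sumR_S, sumR_shift, sumR_plus. simpl. ring. Qed.

Lemma Phi_Gpsi h g nn xx ss : PhiR h (VPf g nn ss ++ IPf g nn xx ss) =
  sumR (fun j => IZR (ovf g nn ss j) * h (Vtx j)) 0 (S g) +
  sumR (fun i => PhiR h (edgeL nn xx ss i true) + PhiR h (edgeL nn xx ss i false)) 1 g.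
Proof. rewrite PhiR_app. unfold VPf, IPf. rewrite PhiR_map, PhiR_flat_map.
  f_equal. apply sumR_ext. intros; apply PhiR_app. Qed.

Definition Tf (nn : nat -> bool -> nat) (ss : nat -> bool -> nat -> Z) j : Z :=
  if (1 <=? j)%nat then (ss j true (nn j true - 1)%nat + ss j false (nn j false - 1)%nat)%Z else 0%Z.
Definition Af (ss : nat -> bool -> nat -> Z) j : Z := (ss j true 0%nat + ss j false 0%nat)%Z.

Lemma ovf_lt g nn ss j : (j < g)%nat -> ovf g nn ss j = (Tf nn ss j - Af ss (S j))%Z.
Proof. intros H. unfold ovf, Tf, Af. replace (j <? g)%nat with true by (symmetry; apply Nat.ltb_lt; lia). reflexivity. Qed.
Lemma ovf_g g nn ss : ovf g nn ss g = Tf nn ss g.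
Proof. unfold ovf, Tf. rewrite Nat.ltb_irrefl. ring. Qed.

Lemma Gpsi_deg g l m psi nn xx ss : (1 <= g)%nat ->
  (forall i, (1 <= i <= g)%nat -> 0 < l i /\ 0 < m i) ->
  (forall i e, (1 <= i <= g)%nat -> PLd (edge_fun l m psi i e) (len l m i e) (nn i e) (xx i e) (ss i e)) ->
  PhiR (fun _ => 1) (VPf g nn ss ++ IPf g nn xx ss) = 0.
Proof.
  intros Hg Hlm HP. rewrite Phi_Gpsi, sum_rearr.
  rewrite (sumR_ext _ (fun j => IZR (Tf nn ss j - Tf nn ss (S j)))).
  - rewrite tele0, ovf_g. unfold Tf. destruct g; [lia|]. simpl. rewrite opp_IZR. ring.
  - intros j Hj. rewrite ovf_lt by lia.
    rewrite (edge_Phi_const _ 1 nn xx ss (S j) true _ _ (HP (S j) true ltac:(lia)))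
      by (try apply (len_pos g); auto; lia).
    rewrite (edge_Phi_const _ 1 nn xx ss (S j) false _ _ (HP (S j) false ltac:(lia)))
      by (try apply (len_pos g); auto; lia).
    unfold Af. unfold Tf. destruct j; simpl; repeat rewrite ?minus_IZR, ?plus_IZR, ?opp_IZR; ring.
Qed.

Lemma edge_fun_0 l m psi i e : edge_fun l m psi i e 0 = psi (Vtx (i-1)).
Proof. unfold edge_fun. destruct Req_EM_T; [reflexivity|lra]. Qed.
Lemma edge_fun_L l m psi i e : len l m i e <> 0 -> edge_fun l m psi i e (len l m i e) = psi (Vtx i).
Proof. intros H. unfold edge_fun. destruct Req_EM_T; [contradiction|]. destruct Req_EM_T; [reflexivity|lra]. Qed.

Lemma Gpsi_sig g l m psi nn xx ss k : (1 <= k <= g)%nat ->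
  (forall i, (1 <= i <= g)%nat -> 0 < l i /\ 0 < m i) ->
  (forall i e, (1 <= i <= g)%nat -> PLd (edge_fun l m psi i e) (len l m i e) (nn i e) (xx i e) (ss i e)) ->
  PhiR (wk l k) (VPf g nn ss ++ IPf g nn xx ss) = IZR (ss k false (nn k false - 1)%nat) * (l k + m k).
Proof.
  intros Hk Hlm HP. rewrite Phi_Gpsi, sum_rearr.
  set (E := fun i => PhiR (wk l k) (edgeL nn xx ss i true) + PhiR (wk l k) (edgeL nn xx ss i false)).
  set (V := fun j => IZR (ovf g nn ss j) * wk l k (Vtx j)).
  assert (Elt : forall i, (1 <= i < k)%nat -> E i = 0).
  { intros i Hi. unfold E.
    rewrite (edge_Phi_const _ 0 nn xx ss i true _ _ (HP i true ltac:(lia))).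
    rewrite (edge_Phi_const _ 0 nn xx ss i false _ _ (HP i false ltac:(lia))). ring.
    apply (len_pos g); auto; lia. intros t; simpl. replace (i <? k)%nat with true by (symmetry; apply Nat.ltb_lt; lia). reflexivity.
    apply (len_pos g); auto; lia. intros t; simpl. replace (i <? k)%nat with true by (symmetry; apply Nat.ltb_lt; lia). reflexivity. }
  assert (Egt : forall i, (k < i <= g)%nat -> E i = l k * IZR (Af ss i - Tf nn ss i)).
  { intros i Hi. unfold E.
    rewrite (edge_Phi_const _ (l k) nn xx ss i true _ _ (HP i true ltac:(lia))).
    rewrite (edge_Phi_const _ (l k) nn xx ss i false _ _ (HP i false ltac:(lia))).
    unfold Af, Tf. replace (1 <=? i)%nat with true by (symmetry; apply Nat.leb_le; lia).
    repeat rewrite ?minus_IZR, ?plus_IZR, ?opp_IZR; ring.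
    apply (len_pos g); auto; lia. intros t; simpl. replace (i <? k)%nat with false by (symmetry; apply Nat.ltb_ge; lia).
      replace (k <? i)%nat with true by (symmetry; apply Nat.ltb_lt; lia). reflexivity.
    apply (len_pos g); auto; lia. intros t; simpl. replace (i <? k)%nat with false by (symmetry; apply Nat.ltb_ge; lia).
      replace (k <? i)%nat with true by (symmetry; apply Nat.ltb_lt; lia). reflexivity. }
  assert (Ek : E k = - IZR (ss k true (nn k true - 1)%nat) * l k + IZR (ss k false (nn k false - 1)%nat) * m k).
  { unfold E.
    rewrite (edge_Phi_lin _ 1 nn xx ss k true _ _ (HP k true ltac:(lia))).
    rewrite (edge_Phi_lin _ (-1) nn xx ss k false _ _ (HP k false ltac:(lia))).
    assert (0 < l k /\ 0 < m k) as [H1 H2] by (apply Hlm; lia).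
    rewrite !edge_fun_0, !edge_fun_L. unfold len. ring.
    unfold len; lra. unfold len; lra.
    apply (len_pos g); auto; lia. intros t; simpl. rewrite Nat.ltb_irrefl. ring.
    apply (len_pos g); auto; lia. intros t; simpl. rewrite Nat.ltb_irrefl. ring. }
  assert (Hsum : forall n, (n <= g)%nat -> sumR (fun j => V j + E (S j)) 0 n =
     if (n <? k)%nat then 0 else E k + l k * IZR (Tf nn ss k - Tf nn ss n)).
  { induction n; intros Hn.
    - replace (0 <? k)%nat with true by (symmetry; apply Nat.ltb_lt; lia). reflexivity.
    - rewrite sumR_S, IHn by lia. simpl (0 + n)%nat.
      destruct (Nat.lt_total (S n) k) as [Hl|[Hl|Hl]].
      + replace (n <? k)%nat with true by (symmetry; apply Nat.ltb_lt; lia).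
        replace (S n <? k)%nat with true by (symmetry; apply Nat.ltb_lt; lia).
        rewrite (Elt (S n)) by lia. unfold V. simpl. replace (k <=? n)%nat with false by (symmetry; apply Nat.leb_gt; lia). ring.
      + replace (n <? k)%nat with true by (symmetry; apply Nat.ltb_lt; lia).
        replace (S n <? k)%nat with false by (symmetry; apply Nat.ltb_ge; lia).
        unfold V. simpl. replace (k <=? n)%nat with false by (symmetry; apply Nat.leb_gt; lia). rewrite Hl.
        rewrite Z.sub_diag. ring.
      + replace (n <? k)%nat with false by (symmetry; apply Nat.ltb_ge; lia).
        replace (S n <? k)%nat with false by (symmetry; apply Nat.ltb_ge; lia).
        rewrite (Egt (S n)) by lia. unfold V. simpl. replace (k <=? n)%nat with true by (symmetry; apply Nat.leb_le; lia).
        rewrite ovf_lt by lia. repeat rewrite ?minus_IZR. ring. }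
  rewrite Hsum by lia. replace (g <? k)%nat with false by (symmetry; apply Nat.ltb_ge; lia).
  unfold V. rewrite ovf_g. simpl. replace (k <=? g)%nat with true by (symmetry; apply Nat.leb_le; lia).
  rewrite Ek. unfold Tf. replace (1 <=? k)%nat with true by (symmetry; apply Nat.leb_le; lia).
  repeat rewrite ?minus_IZR, ?plus_IZR, ?opp_IZR. ring.
Qed.

Lemma deg_IZR D : IZR (deg D) = PhiR (fun _ => 1) D.
Proof. rewrite deg_PhiZ, <- PhiR_IZR. reflexivity. Qed.

Lemma valid_coef0 g l m D p : valid_div g l m D -> ~ valid_point g l m p -> coef D p = 0%Z.
Proof. intros HD Hp. apply coef_notin. intros q z Hq E. subst. apply Hp. eapply HD; eauto. Qed.

Lemma lin_inv g l m D D' : (1 <= g)%nat ->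
  (forall i, (1 <= i <= g)%nat -> 0 < l i /\ 0 < m i) ->
  valid_div g l m D -> valid_div g l m D' -> lin_equiv g l m D D' ->
  deg D = deg D' /\ forall k, (1 <= k <= g)%nat -> cong (PhiR (wk l k) D - PhiR (wk l k) D') (l k + m k).
Proof.
  intros Hg Hlm HD HD' [psi [HPL Hord]].
  destruct (PL_choice g l m psi HPL) as (nn&xx&ss&HP).
  set (Gp := VPf g nn ss ++ IPf g nn xx ss).
  assert (Key : forall h, PhiR h D - PhiR h D' = PhiR h Gp).
  { intros h. rewrite <- PhiR_sub. apply Rminus_diag_uniq. rewrite <- PhiR_sub.
    apply PhiR_zero. intros p. rewrite !coef_sub.
    destruct (classic (valid_point g l m p)) as [Hp|Hp].
    - rewrite (ord_uniq g l m psi p _ _ (Hord p Hp) (Gpsi_ord g l m psi nn xx ss Hlm HP p Hp)). apply Z.sub_diag.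
    - rewrite (valid_coef0 g l m D), (valid_coef0 g l m D'), (valid_coef0 g l m Gp); auto.
      intros q z Hq. eapply Gpsi_valid; eauto. }
  split.
  - apply eq_IZR. apply Rminus_diag_uniq. rewrite !deg_IZR, Key. apply (Gpsi_deg g l m psi); auto.
  - intros k Hk. exists (ss k false (nn k false - 1)%nat). rewrite Key. apply (Gpsi_sig g l m psi); auto.
Qed.

Lemma cong_add x y c : cong x c -> cong y c -> cong (x + y) c.
Proof. intros [a Ha] [b Hb]. exists (a + b)%Z. rewrite plus_IZR. subst. ring. Qed.
Lemma cong_opp x c : cong x c -> cong (- x) c.
Proof. intros [a Ha]. exists (- a)%Z. rewrite opp_IZR. subst. ring. Qed.
Lemma cong_sub x y c : cong x c -> cong y c -> cong (x - y) c.
Proof. intros. apply cong_add; auto. apply cong_opp; auto. Qed.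
Lemma cong_mulZ k x c : cong x c -> cong (IZR k * x) c.
Proof. intros [a Ha]. exists (k * a)%Z. rewrite mult_IZR. subst. ring. Qed.
Lemma cong_0 c : cong 0 c.
Proof. exists 0%Z. ring. Qed.
Lemma cong_eq x y c : x = y -> cong x c -> cong y c.
Proof. intros ->; auto. Qed.
Lemma not_cong_small x c : 0 < x < c -> ~ cong x c.
Proof.
  intros H [q Hq]. subst. assert (0 < IZR q) by nra. assert (IZR q < 1) by nra.
  apply lt_IZR in H0. apply lt_IZR in H1. lia.
Qed.

Definition step (l m : nat -> R) (tau : nat -> R) (i : nat) (v : Z) : Z :=
  (v + if excluded_middle_informative (cong (tau i - IZR v * l i) (l i + m i)) then 0 else 1)%Z.
Fixpoint walk (l m : nat -> R) (tau : nat -> R) (i : nat) (v : Z) (n : nat) : Z :=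
  match n with
  | O => v
  | S n' => step l m tau (i - n') (walk l m tau i v n')
  end.
Fixpoint Mf (l m : nat -> R) (sg : nat -> R) (d : Z) (k : nat) : Z :=
  match k with
  | O => d
  | S k' => (Mf l m sg d k' - 1 +
      if excluded_middle_informative (cong (sg (S k') - IZR (Mf l m sg d k') * l (S k')) (l (S k') + m (S k'))) then 1 else 0)%Z
  end.

Lemma step_bounds l m tau i v : (v <= step l m tau i v <= v + 1)%Z.
Proof. unfold step. destruct excluded_middle_informative; lia. Qed.
Lemma walk_bounds l m tau i v n : (v <= walk l m tau i v n <= v + Z.of_nat n)%Z.
Proof. induction n; simpl. lia. pose proof (step_bounds l m tau (i - n) (walk l m tau i v n)). lia. Qed.
Lemma Mf_le l m sg d k : (Mf l m sg d (S k) <= Mf l m sg d k)%Z.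
Proof. simpl. destruct excluded_middle_informative; lia. Qed.
Lemma Mf_le_d l m sg d k : (Mf l m sg d k <= d)%Z.
Proof. induction k. simpl; lia. pose proof (Mf_le l m sg d k). lia. Qed.

Lemma walk_compose l m tau i v a b : (a <= i)%nat ->
  walk l m tau i v (a + b) = walk l m tau (i - a) (walk l m tau i v a) b.
Proof.
  intros Ha. induction b. rewrite Nat.add_0_r. reflexivity.
  rewrite Nat.add_succ_r. simpl. rewrite IHb. f_equal. lia.
Qed.

Lemma step_cong l m tau tau' i v : cong (tau i - tau' i) (l i + m i) -> step l m tau i v = step l m tau' i v.
Proof.
  intros H. unfold step. destruct excluded_middle_informative as [c|c];
  destruct excluded_middle_informative as [c'|c']; auto; exfalso.
  - apply c'. eapply cong_eq; [|apply (cong_sub _ _ _ c H)]. ring.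
  - apply c. eapply cong_eq; [|apply (cong_add _ _ _ c' H)]. ring.
Qed.
Lemma walk_cong l m tau tau' i v n : (forall n', (n' < n)%nat -> cong (tau (i - n')%nat - tau' (i - n')%nat) (l (i - n')%nat + m (i - n')%nat)) ->
  walk l m tau i v n = walk l m tau' i v n.
Proof.
  intros H. induction n. reflexivity. simpl. rewrite IHn by (intros; apply H; lia).
  apply step_cong. apply H. lia.
Qed.
Lemma walk_shift l m tau tau' i v n : (forall n', (n' < n)%nat -> tau' (i - n')%nat = tau (i - n')%nat - l (i - n')%nat) ->
  walk l m tau' i v n = (walk l m tau i (v + 1) n - 1)%Z.
Proof.
  intros H. induction n. simpl. ring. simpl. rewrite IHn by (intros; apply H; lia).
  unfold step. rewrite H by lia.
  replace (tau (i - n)%nat - l (i - n)%nat - IZR (walk l m tau i (v + 1) n - 1) * l (i - n)%nat)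
    with (tau (i - n)%nat - IZR (walk l m tau i (v + 1) n) * l (i - n)%nat) by (rewrite minus_IZR; ring).
  destruct excluded_middle_informative; ring.
Qed.

Lemma PM l m sg d j v : (walk l m sg j v j <= d)%Z -> (v <= Mf l m sg d j)%Z.
Proof.
  revert v. induction j; intros v H. simpl in *. exact H.
  change (walk l m sg (S j) v (S j)) with (walk l m sg (S j) v (1 + j)) in H. rewrite walk_compose in H by lia.
  replace (S j - 1)%nat with j in H by lia. simpl in H. replace (S j - 0)%nat with (S j) in H by lia.
  apply IHj in H. simpl. unfold step in H.
  destruct (excluded_middle_informative (cong (sg (S j) - IZR v * l (S j)) (l (S j) + m (S j)))) as [c|c].
  - destruct (Z.eq_dec v (Mf l m sg d j)) as [E|E].
    + rewrite <- E. destruct excluded_middle_informative; [lia|contradiction].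
    + destruct excluded_middle_informative; lia.
  - destruct excluded_middle_informative; lia.
Qed.

Definition Rk (k : nat) (p : point) : Z :=
  match p with Vtx j => if (k <? j)%nat then 1%Z else 0%Z | Inn i _ _ => if (k <? i)%nat then 1%Z else 0%Z end.
Definition Ak (k : nat) (p : point) : Z :=
  match p with Vtx j => if (j =? k)%nat then 1%Z else 0%Z | Inn i _ _ => if (i =? k)%nat then 1%Z else 0%Z end.
Definition posA (l : nat -> R) (k : nat) (p : point) : R :=
  match p with Vtx j => if (j =? k)%nat then l k else 0
  | Inn i e t => if (i =? k)%nat then (if e then t else - t) else 0 end.

Lemma Rk_split k p : (1 <= k)%nat -> Rk (k - 1) p = (Rk k p + Ak k p)%Z.
Proof.
  intros Hk. destruct p as [j|i e t]; simpl.
  - destruct (k - 1 <? j)%nat eqn:E1, (k <? j)%nat eqn:E2, (j =? k)%nat eqn:E3;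
    rewrite ?Nat.ltb_lt, ?Nat.ltb_ge, ?Nat.eqb_eq, ?Nat.eqb_neq in *; lia.
  - destruct (k - 1 <? i)%nat eqn:E1, (k <? i)%nat eqn:E2, (i =? k)%nat eqn:E3;
    rewrite ?Nat.ltb_lt, ?Nat.ltb_ge, ?Nat.eqb_eq, ?Nat.eqb_neq in *; lia.
Qed.
Lemma wk_split l k p : wk l k p = IZR (Rk k p) * l k + posA l k p.
Proof.
  destruct p as [j|i e t]; simpl.
  - destruct (k <=? j)%nat eqn:E1, (k <? j)%nat eqn:E2, (j =? k)%nat eqn:E3;
    rewrite ?Nat.leb_le, ?Nat.leb_gt, ?Nat.ltb_lt, ?Nat.ltb_ge, ?Nat.eqb_eq, ?Nat.eqb_neq in *;
    try lia; try (subst; ring).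
  - destruct (i <? k)%nat eqn:E1, (k <? i)%nat eqn:E2, (i =? k)%nat eqn:E3;
    rewrite ?Nat.ltb_lt, ?Nat.ltb_ge, ?Nat.eqb_eq, ?Nat.eqb_neq in *; try lia; ring.
Qed.

Lemma eff_step l m E k v : effective E -> (1 <= k)%nat ->
  (v <= PhiZ (Rk k) E)%Z -> (step l m (fun i => PhiR (wk l i) E) k v <= PhiZ (Rk (k - 1)) E)%Z.
Proof.
  intros HE Hk Hv.
  rewrite (PhiZ_ext _ (fun p => Rk k p + Ak k p)%Z) by (intros; apply Rk_split; auto).
  rewrite PhiZ_plus.
  assert (HA : (0 <= PhiZ (Ak k) E)%Z).
  { apply PhiZ_pos. exact HE. intros p; destruct p; simpl; destruct Nat.eqb; lia. }
  pose proof (step_bounds l m (fun i => PhiR (wk l i) E) k v).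
  destruct (Z.eq_dec (PhiZ (Ak k) E) 0) as [H0|H0]; [|lia].
  assert (Hp : PhiR (posA l k) E = 0).
  { apply (PhiZ_supp (Ak k)); auto. intros p; destruct p; simpl; destruct Nat.eqb; lia.
    intros p; destruct p; simpl; destruct Nat.eqb; auto; discriminate. }
  assert (Ht : PhiR (wk l k) E = IZR (PhiZ (Rk k) E) * l k).
  { rewrite (PhiR_ext _ (fun p => IZR (Rk k p) * l k + posA l k p)) by (intros; apply wk_split).
    rewrite PhiR_plus, Hp. rewrite <- PhiR_IZR.
    rewrite (PhiR_ext _ (fun p => l k * IZR (Rk k p))) by (intros; ring). rewrite PhiR_mulc. ring. }
  destruct (Z.eq_dec v (PhiZ (Rk k) E)) as [Ev|Ev]; [|lia].
  unfold step. destruct excluded_middle_informative as [c|c]; [lia|].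
  exfalso. apply c. rewrite Ht, Ev. exists 0%Z. ring.
Qed.

Lemma eff_walk g l m E : effective E -> valid_div g l m E ->
  (walk l m (fun i => PhiR (wk l i) E) g 0 g <= deg E)%Z.
Proof.
  intros HE HV.
  assert (H : forall n, (n <= g)%nat -> (walk l m (fun i => PhiR (wk l i) E) g 0 n <= PhiZ (Rk (g - n)) E)%Z).
  { induction n; intros Hn.
    - simpl. apply PhiZ_pos; auto. intros p; destruct p; simpl; destruct Nat.ltb; lia.
    - simpl. replace (g - S n)%nat with (g - n - 1)%nat by lia. apply eff_step; auto. lia.
      apply IHn; lia. }
  specialize (H g (le_n g)). rewrite Nat.sub_diag in H.
  rewrite deg_PhiZ. assert (0 <= PhiZ (fun p => 1 - Rk 0 p) E)%Z.
  { apply PhiZ_pos; auto. intros p; destruct p as [j|i e t]; simpl; [destruct j|destruct i]; simpl; lia. }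
  rewrite PhiZ_minus in H0. lia.
Qed.

Lemma gen_pos g l m k N : generic g l m -> (1 <= k <= g)%nat -> 0 < l k -> 0 < m k ->
  (0 < N)%Z -> (N <= 2 * Z.of_nat g - 2)%Z -> ~ cong (IZR N * l k) (l k + m k).
Proof.
  intros Hgen Hk Hl Hm HN HN2 [q Hq].
  assert (0 < IZR N) by (apply IZR_lt; lia).
  assert (Hq0 : (0 < q)%Z). { apply lt_IZR. nra. }
  assert (Hq1 : (q < N)%Z). { apply lt_IZR. assert (0 < IZR q) by (apply IZR_lt; lia). nra. }
  apply (Hgen k Hk (Z.to_nat q) (Z.to_nat (N - q))); try lia.
  rewrite !INR_IZR_INZ, !Z2Nat.id by lia. rewrite minus_IZR.
  assert (0 < IZR N - IZR q) by (rewrite <- minus_IZR; apply IZR_lt; lia).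
  field_simplify_eq; [|lra]. nra.
Qed.

Lemma gen_nz g l m k N : generic g l m -> (1 <= k <= g)%nat -> 0 < l k -> 0 < m k ->
  N <> 0%Z -> (Z.abs N <= 2 * Z.of_nat g - 2)%Z -> ~ cong (IZR N * l k) (l k + m k).
Proof.
  intros Hgen Hk Hl Hm HN HN2 Hc.
  destruct (Z_lt_le_dec 0 N).
  - eapply gen_pos; eauto. lia.
  - apply (gen_pos g l m k (- N)); auto; try lia.
    eapply cong_eq; [|apply cong_opp; exact Hc]. rewrite opp_IZR. ring.
Qed.

Lemma sig_canon g l k : (1 <= k <= g)%nat -> PhiR (wk l k) (canonical g) = 2 * INR (g - k) * l k.
Proof.
  intros Hk. unfold canonical. rewrite PhiR_map.
  assert (forall n, sumR (fun j => IZR 2 * wk l k (Vtx j)) 1 n = 2 * INR (n + 1 - k) * l k).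
  { induction n. unfold sumR. simpl seq. simpl fold_right. destruct k; [lia|]. simpl. ring.
    rewrite sumR_S, IHn. replace (1 + n)%nat with (S n) by lia. unfold wk. destruct (k <=? S n)%nat eqn:E.
    - apply Nat.leb_le in E. replace (S n + 1 - k)%nat with (S (n + 1 - k)) by lia. rewrite S_INR. ring.
    - apply Nat.leb_gt in E. replace (S n + 1 - k)%nat with 0%nat by lia. replace (n + 1 - k)%nat with 0%nat by lia.
      ring. }
  rewrite H. replace (g - 1 + 1 - k)%nat with (g - k)%nat by lia. ring.
Qed.

Lemma deg_canon g : (1 <= g)%nat -> deg (canonical g) = (2 * Z.of_nat g - 2)%Z.
Proof.
  intros Hg. unfold canonical. assert (forall a n, deg (map (fun j => (Vtx j, 2%Z)) (seq a n)) = (2 * Z.of_nat n)%Z).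
  { intros a n. revert a. induction n; intros a. reflexivity. cbn [seq map].
    assert (Hc : forall q z D, deg ((q,z)::D) = (z + deg D)%Z) by reflexivity. rewrite Hc, IHn. lia. }
  rewrite H. lia.
Qed.

Lemma Mf_ge l m sg d k : (Mf l m sg d k - 1 <= Mf l m sg d (S k))%Z.
Proof. simpl. destruct excluded_middle_informative; lia. Qed.

Lemma comb g l m (sg : nat -> R) d :
  (1 <= g)%nat -> (forall i, (1 <= i <= g)%nat -> 0 < l i /\ 0 < m i) -> generic g l m ->
  (forall n, (n < g)%nat -> (walk l m sg g 0 n + 2 <= Mf l m sg d (g - S n))%Z) ->
  (walk l m (fun i => (2 * INR (g - i) * l i - 2 * sg i)%R) g 0 g <= 2 * Z.of_nat g - 2 - 2 * d)%Z ->
  False.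
Proof.
  intros Hg Hlm Hgen R1 HZ.
  set (tz := fun i => 2 * INR (g - i) * l i - 2 * sg i) in *.
  assert (Zb : forall n, (0 <= walk l m tz g 0 n <= Z.of_nat n)%Z) by (intros; pose proof (walk_bounds l m tz g 0 n); lia).
  assert (Bb : forall n, (0 <= walk l m sg g 0 n <= Z.of_nat n)%Z) by (intros; pose proof (walk_bounds l m sg g 0 n); lia).
  assert (Md : forall k, (Mf l m sg d k <= d)%Z) by (intros; apply Mf_le_d).
  assert (Hd : (d <= Z.of_nat g - 1)%Z) by (specialize (Zb g); lia).
  assert (Inv : forall n, (n <= g)%nat ->
     (2 * Z.of_nat n - Mf l m sg d (g - n) - walk l m sg g 0 n - walk l m tz g 0 n <= 0)%Z).
  { induction n; intros Hn.
    - simpl walk. rewrite Nat.sub_0_r. specialize (R1 0%nat ltac:(lia)). simpl walk in R1.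
      pose proof (Mf_ge l m sg d (g - 1)). replace (S (g - 1)) with g in H by lia.
      replace (g - 1)%nat with (g - S 0)%nat in H by lia. lia.
    - specialize (IHn ltac:(lia)). specialize (R1 n ltac:(lia)).
      set (k' := (g - S n)%nat) in *.
      assert (Ek : (g - n)%nat = S k') by (unfold k'; lia).
      assert (Hk : (1 <= S k' <= g)%nat) by lia.
      destruct (Hlm (S k') Hk) as [Hl Hm].
      change (walk l m sg g 0 (S n)) with (step l m sg (g - n) (walk l m sg g 0 n)).
      change (walk l m tz g 0 (S n)) with (step l m tz (g - n) (walk l m tz g 0 n)).
      rewrite Ek in *. simpl Mf in IHn.
      set (B := walk l m sg g 0 n) in *. set (Zn := walk l m tz g 0 n) in *.
      set (M := Mf l m sg d k') in *.
      assert (HBb := Bb n). assert (HZb := Zb n). assert (HMd := Md k').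
      assert (Htz : tz (S k') = 2 * IZR (Z.of_nat n) * l (S k') - 2 * sg (S k')).
      { unfold tz. rewrite <- INR_IZR_INZ. replace (g - S k')%nat with n by lia. reflexivity. }
      unfold step.
      destruct (excluded_middle_informative (cong (sg (S k') - IZR M * l (S k')) (l (S k') + m (S k')))) as [u|u] in IHn |- *;
      destruct (excluded_middle_informative (cong (sg (S k') - IZR B * l (S k')) (l (S k') + m (S k')))) as [b|b];
      destruct (excluded_middle_informative (cong (tz (S k') - IZR Zn * l (S k')) (l (S k') + m (S k')))) as [z|z];
      try lia.
      + exfalso. apply (gen_nz g l m (S k') (M - B)); auto; try lia.
        eapply cong_eq; [|apply (cong_sub _ _ _ b u)]. rewrite minus_IZR. ring.
      + exfalso. apply (gen_nz g l m (S k') (M - B)); auto; try lia.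
        eapply cong_eq; [|apply (cong_sub _ _ _ b u)]. rewrite minus_IZR. ring.
      + exfalso. apply (gen_nz g l m (S k') (2 * Z.of_nat n - Zn - 2 * M)); auto; try lia.
        eapply cong_eq; [|apply (cong_add _ _ _ z (cong_mulZ 2 _ _ u))]. rewrite Htz.
        rewrite !minus_IZR, !mult_IZR. ring.
      + destruct (Z.eq_dec (2 * Z.of_nat n - Zn - 2 * B) 0) as [E0|E0]; [lia|].
        exfalso. apply (gen_nz g l m (S k') (2 * Z.of_nat n - Zn - 2 * B)); auto; try lia.
        eapply cong_eq; [|apply (cong_add _ _ _ z (cong_mulZ 2 _ _ b))]. rewrite Htz.
        rewrite !minus_IZR, !mult_IZR. ring. }
  specialize (Inv g (le_n g)). rewrite Nat.sub_diag in Inv. simpl Mf in Inv.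
  specialize (R1 (g - 1)%nat ltac:(lia)). replace (g - S (g - 1))%nat with 0%nat in R1 by lia. simpl Mf in R1.
  pose proof (walk_bounds l m sg g 0 (g - 1)).
  assert (walk l m sg g 0 g <= walk l m sg g 0 (g - 1) + 1)%Z.
  { assert (Hw : walk l m sg g 0 g = step l m sg (g - (g-1)) (walk l m sg g 0 (g-1)))
      by (destruct g; [lia|]; simpl; rewrite Nat.sub_0_r; reflexivity).
    rewrite Hw. apply step_bounds. }
  lia.
Qed.

Lemma valid_app g l m A B : valid_div g l m A -> valid_div g l m B -> valid_div g l m (A ++ B).
Proof. intros HA HB q z H. apply in_app_iff in H. destruct H; eauto. Qed.
Lemma valid_scale g l m k A : valid_div g l m A -> valid_div g l m (div_scale k A).
Proof. intros HA q z H. unfold div_scale in H. apply in_map_iff in H. destruct H as [[q' z'] [E H]].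
  inversion E; subst. simpl. eauto. Qed.
Lemma valid_sub g l m A B : valid_div g l m A -> valid_div g l m B -> valid_div g l m (div_sub A B).
Proof. intros. apply valid_app; auto. apply valid_scale; auto. Qed.
Lemma deg_sub A B : deg (div_sub A B) = (deg A - deg B)%Z.
Proof. rewrite !deg_PhiZ. apply PhiZ_sub. Qed.
Lemma deg_app A B : deg (A ++ B) = (deg A + deg B)%Z.
Proof. rewrite !deg_PhiZ. apply PhiZ_app. Qed.
Lemma coef_single p c q : coef ((p, c) :: nil) q = if point_eq_dec p q then c else 0%Z.
Proof. simpl. destruct point_eq_dec; ring. Qed.
Lemma PhiR_single h p c : PhiR h ((p, c) :: nil) = IZR c * h p.
Proof. simpl. ring. Qed.
Lemma valid_canon g l m : valid_div g l m (canonical g).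
Proof. intros q z H. unfold canonical in H. apply in_map_iff in H. destruct H as [j [E H]].
  inversion E; subst. apply in_seq in H. simpl. lia. Qed.

Theorem theorem1p1 (g : nat) (l m : nat -> R) :
  (1 <= g)%nat ->
  (forall i, (1 <= i <= g)%nat -> 0 < l i /\ 0 < m i) ->
  generic g l m ->
  ~ (exists D : divisor,
       valid_div g l m D /\ rank_ge g l m D 1 /\
       exists E : divisor,
         valid_div g l m E /\ effective E /\
         lin_equiv g l m (div_sub (canonical g) (div_scale 2 D)) E).
Proof.
  intros Hg Hlm Hgen [D [HD [[r [Hr Hrank]] [E [HE [HEeff HElin]]]]]].
  set (sg := fun i => PhiR (wk l i) D).
  apply (comb g l m sg (deg D) Hg Hlm Hgen).
  - intros n Hn. set (j := (g - n)%nat).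
    assert (Hj : (1 <= j <= g)%nat) by (unfold j; lia).
    destruct (Hlm j Hj) as [Hl Hm].
    set (B := walk l m sg g 0 n).
    assert (Ht : exists t, 0 < t < l j /\ ~ cong (sg j - t - IZR B * l j) (l j + m j)).
    { destruct (classic (cong (sg j - l j / 2 - IZR B * l j) (l j + m j))) as [c1|c1].
      - exists (l j / 4). split; [lra|]. intros c2. apply (not_cong_small (l j / 4) (l j + m j)). lra.
        eapply cong_eq; [|apply (cong_sub _ _ _ c2 c1)]. field.
      - exists (l j / 2). split; [lra|exact c1]. }
    destruct Ht as [t [Ht Htc]].
    set (p := Inn j true t).
    assert (Hpv : valid_point g l m p) by (simpl; unfold len; split; [lia|lra]).
    destruct (Hrank ((p, Z.of_nat r) :: nil)) as [E1 [HE1v [HE1eff HE1lin]]].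
    { intros q z Hq. destruct Hq as [Hq|[]]. inversion Hq; subst. exact Hpv. }
    { intros q. rewrite coef_single. destruct point_eq_dec; lia. }
    { simpl. lia. }
    assert (HDF : valid_div g l m (div_sub D ((p, Z.of_nat r) :: nil))).
    { apply valid_sub; auto. intros q z Hq. destruct Hq as [Hq|[]]. inversion Hq; subst. exact Hpv. }
    destruct (lin_inv g l m _ _ Hg Hlm HDF HE1v HE1lin) as [Hdeg Hsig].
    set (E' := E1 ++ (p, (Z.of_nat r - 1)%Z) :: nil).
    assert (HE'eff : effective E').
    { intros q. unfold E'. rewrite coef_app, coef_single. specialize (HE1eff q). destruct point_eq_dec; lia. }
    assert (HE'v : valid_div g l m E').
    { apply valid_app; auto. intros q z Hq. destruct Hq as [Hq|[]]. inversion Hq; subst. exact Hpv. }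
    pose proof (eff_walk g l m E' HE'eff HE'v) as HW.
    assert (HdegE' : deg E' = (deg D - 1)%Z).
    { unfold E'. rewrite deg_app, <- Hdeg, deg_sub. simpl. lia. }
    set (tau := fun i => sg i - wk l i p).
    rewrite (walk_cong l m _ tau) in HW.
    2:{ intros n' Hn'. set (i := (g - n')%nat). assert (Hi : (1 <= i <= g)%nat) by (unfold i; lia).
        specialize (Hsig i Hi). unfold E', tau, sg. rewrite PhiR_app, PhiR_single.
        rewrite PhiR_sub, PhiR_single in Hsig.
        eapply cong_eq; [|apply cong_opp; exact Hsig]. rewrite minus_IZR. simpl. ring. }
    rewrite HdegE' in HW.
    replace g with (n + S (j - 1))%nat in HW at 2 by (unfold j; lia).
    rewrite walk_compose in HW by lia.
    rewrite (walk_cong l m tau sg g 0 n) in HW.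
    2:{ intros n' Hn'. unfold tau. replace (wk l (g - n')%nat p) with 0.
        eapply cong_eq; [|apply cong_0]. ring. unfold p. simpl.
        replace (g - n' <? j)%nat with false by (symmetry; apply Nat.ltb_ge; unfold j; lia).
        replace (j <? g - n')%nat with true by (symmetry; apply Nat.ltb_lt; unfold j; lia). reflexivity. }
    fold B in HW. fold j in HW.
    change (S (j - 1)) with (1 + (j - 1))%nat in HW. rewrite walk_compose in HW by lia.
    assert (Hs : walk l m tau j B 1 = (B + 1)%Z).
    { simpl. rewrite Nat.sub_0_r. unfold step.
      destruct excluded_middle_informative as [c|c]; [|reflexivity].
      exfalso. apply Htc. eapply cong_eq; [|exact c]. unfold tau, p. simpl.
      rewrite Nat.ltb_irrefl. ring. }
    rewrite Hs in HW.
    rewrite (walk_shift l m sg tau) in HW.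
    2:{ intros n' Hn'. unfold tau, p. simpl.
        replace (j <? j - 1 - n')%nat with false by (symmetry; apply Nat.ltb_ge; lia).
        replace (j - 1 - n' <? j)%nat with true by (symmetry; apply Nat.ltb_lt; lia). reflexivity. }
    assert (HPM : (B + 1 + 1 <= Mf l m sg (deg D) (j - 1))%Z) by (apply PM; lia).
    replace (g - S n)%nat with (j - 1)%nat by (unfold j; lia). lia.
  - assert (HKv : valid_div g l m (div_sub (canonical g) (div_scale 2 D))).
    { apply valid_sub. apply valid_canon. apply valid_scale. auto. }
    destruct (lin_inv g l m _ _ Hg Hlm HKv HE HElin) as [Hdeg Hsig].
    pose proof (eff_walk g l m E HEeff HE) as HW.
    rewrite <- Hdeg, deg_sub, deg_canon in HW by auto. rewrite deg_PhiZ, PhiZ_scale, <- deg_PhiZ in HW.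
    rewrite (walk_cong l m _ (fun i => (2 * INR (g - i) * l i - 2 * sg i)%R)) in HW. lia.
    intros n' Hn'. set (i := (g - n')%nat). assert (Hi : (1 <= i <= g)%nat) by (unfold i; lia).
    specialize (Hsig i Hi). rewrite PhiR_sub, PhiR_scale, sig_canon in Hsig by auto.
    eapply cong_eq; [|apply cong_opp; exact Hsig]. unfold sg. ring.
Qed.
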